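(* Let $\varphi=\nu\tilde n.\sigma$ be a frame well-formed with respect to $\mathtt{s}\in\tilde n$ and let $q_{\mathtt{s}}$ be an occurrence (position) of $\mathtt{s}$ in $y\sigma$ for some $y\in\mathrm{dom}(\sigma)$. If $\varphi\nvdash\mathtt{s}$ then there exists a position $q<q_{\mathtt{s}}$ (strict prefix) such that the head symbol of $y\sigma|_q$ is $\mathsf{enc}$ or $\mathsf{enca}$ and $q\cdot1\le q_{\mathtt{s}}$.
   Context: Terms over $\Sigma=\{\mathsf{enc}/3,\mathsf{dec}/2,\mathsf{enca}/3,\mathsf{deca}/2,\mathsf{pub}/1,\mathsf{priv}/1,\langle\cdot,\cdot\rangle/2,\pi_1/1,\pi_2/1,\mathsf{sign}/2,\mathsf{check}/3,\mathsf{retrieve}/1\}$, constants, names and variables; destructors are $\pi_1,\pi_2,\mathsf{dec},\mathsf{deca},\mathsf{check},\mathsf{retrieve}$. Equational theory $E$: $\pi_i(\langle z_1,z_2\rangle)=z_i$, $\mathsf{dec}(\mathsf{enc}(z_1,z_2,z_3),z_2)=z_1$, $\mathsf{deca}(\mathsf{enca}(z_1,\mathsf{pub}(z_2),z_3),\mathsf{priv}(z_2))=z_1$, $\mathsf{check}(z_1,\mathsf{sign}(z_1,\mathsf{priv}(z_2)),\mathsf{pub}(z_2))=\mathsf{ok}$, $\mathsf{retrieve}(\mathsf{sign}(z_1,z_2))=z_1$. Positions are sequences of positive integers ordered by prefix $\le$, $T|_p$ the subterm at $p$. A frame $\varphi=\nu\tilde n.\sigma$: finite set of restricted names and acyclic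 substitution. $\varphi\vdash M$: least relation containing $x\sigma$ ($x\in\mathrm{dom}(\sigma)$) and names outside $\tilde n$, closed under application of any symbol other than $\mathsf{priv}$ and under $=_E$. An encryption occurrence $q$ in $U$ (head of $U|_q$ in $\{\mathsf{enc},\mathsf{enca}\}$) is an agent encryption w.r.t. names $\tilde m$ if $U|_{q\cdot3}\in\tilde m$, and a probabilistic encryption w.r.t. a set of terms $S$ if for all $V\in S$ and $p$ with $V|_p=U|_{q\cdot3}$, $p=q'\cdot3$ with $V|_{q'}=U|_q$. $\varphi$ is well-formed w.r.t. $\mathtt{s}$ if (1) every encryption in $\sigma$ is an agent encryption w.r.t. $\tilde n\setminus\{\mathtt{s}\}$ and a probabilistic encryption w.r.t. $\mathrm{ran}(\sigma)$; (2) for all subterms $\mathsf{enc}(M,K,R)$, $\mathsf{enca}(M',K',R')$, $\mathsf{sign}(U,V)$, $\mathsf{pub}(W)$, $\mathsf{priv}(W')$ of $\varphi$, $\mathtt{s}$ does not occur in $K,K',V,W,W',R,R'$; (3) $\varphi$ contains no destructor. *)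

(* Defs.v *)
From Stdlib Require List.
From mathcomp Require Import all_boot.
Set Implicit Arguments. Unset Strict Implicit. Unset Printing Implicit Defensive.

Inductive sym : Type :=
  | Enc | Dec | Enca | Deca | Pub | Priv | Pair | Proj1 | Proj2
  | Sign | Check | Retrieve.

Definition arity (f : sym) : nat :=
  match f with
  | Enc | Enca | Check => 3
  | Dec | Deca | Pair | Sign => 2
  | Pub | Priv | Proj1 | Proj2 | Retrieve => 1
  end.

Definition is_destructor (f : sym) : Prop :=
  f = Proj1 \/ f = Proj2 \/ f = Dec \/ f = Deca \/ f = Check \/ f = Retrieve.

Inductive term : Type :=
  | TName of nat
  | TVar of nat
  | TCst of nat
  | TApp of sym & seq term.

Definition ok : term := TCst 0.

Fixpoint well_arity (t : term) : bool :=
  match t with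
  | TApp f l => (size l == arity f) && all well_arity l
  | _ => true
  end.

(* Positions: sequences of positive integers; T|_p as a partial function. *)
Fixpoint subterm_at (t : term) (p : seq nat) : option term :=
  match p with
  | [::] => Some t
  | i :: p' =>
      match t with
      | TApp _ l => if (0 < i) && (i <= size l)
                    then subterm_at (nth t l i.-1) p' else None
      | _ => None
      end
  end.

Definition head_sym (t : term) : option sym :=
  match t with TApp f _ => Some f | _ => None end.

Definition occurs (s : nat) (K : term) : Prop :=
  exists p, subterm_at K p = Some (TName s).

Inductive eqE : term -> term -> Prop :=
  | eqE_refl t : eqE t t
  | eqE_sym t u : eqE t u -> eqE u t
  | eqE_trans t u v : eqE t u -> eqE u v -> eqE t v
  | eqE_cong f l1 l2 a b : eqE a b ->
      eqE (TApp f (l1 ++ a :: l2)) (TApp f (l1 ++ b :: l2))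
  | eqE_proj1 z1 z2 : eqE (TApp Proj1 [:: TApp Pair [:: z1; z2]]) z1
  | eqE_proj2 z1 z2 : eqE (TApp Proj2 [:: TApp Pair [:: z1; z2]]) z2
  | eqE_dec z1 z2 z3 : eqE (TApp Dec [:: TApp Enc [:: z1; z2; z3]; z2]) z1
  | eqE_deca z1 z2 z3 :
      eqE (TApp Deca [:: TApp Enca [:: z1; TApp Pub [:: z2]; z3];
                         TApp Priv [:: z2]]) z1
  | eqE_check z1 z2 :
      eqE (TApp Check [:: z1; TApp Sign [:: z1; TApp Priv [:: z2]];
                          TApp Pub [:: z2]]) ok
  | eqE_retrieve z1 z2 : eqE (TApp Retrieve [:: TApp Sign [:: z1; z2]]) z1.

(* Frames nu n~ . sigma.  The substitution is represented in solved form: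
   fsub associates to each x in dom(sigma) the term x sigma. *)
Record frame := Frame { fnames : seq nat; fsub : seq (nat * term) }.

Fixpoint lookup (s : seq (nat * term)) (x : nat) : option term :=
  match s with
  | [::] => None
  | (y, t) :: s' => if y == x then Some t else lookup s' x
  end.

Definition dom (phi : frame) : seq nat := map fst (fsub phi).

Definition in_ran (phi : frame) (t : term) : Prop :=
  exists x, lookup (fsub phi) x = Some t.

Fixpoint vars (t : term) : seq nat :=
  match t with
  | TVar x => [:: x]
  | TApp _ l => flatten (map vars l)
  | _ => [::]
  end.

Definition valid_frame (phi : frame) : Prop :=
  uniq (dom phi) /\
  (forall t, in_ran phi t -> well_arity t /\ forall x, x \in vars t -> x \notin dom phi).

Inductive deduc (phi : frame) : term -> Prop :=
  | ded_var x t : lookup (fsub phi) x = Some t -> deduc phi t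
  | ded_name n : n \notin fnames phi -> deduc phi (TName n)
  | ded_cst c : deduc phi (TCst c)
  | ded_app f l : f <> Priv -> size l = arity f ->
      (forall u, List.In u l -> deduc phi u) -> deduc phi (TApp f l)
  | ded_eq t u : deduc phi t -> eqE t u -> deduc phi u.

Definition enc_occ (U : term) (q : seq nat) : Prop :=
  exists t, subterm_at U q = Some t /\ (head_sym t = Some Enc \/ head_sym t = Some Enca).

Definition agent_enc (m : seq nat) (U : term) (q : seq nat) : Prop :=
  exists n, subterm_at U (q ++ [:: 3]) = Some (TName n) /\ n \in m.

Definition prob_enc (S : term -> Prop) (U : term) (q : seq nat) : Prop :=
  forall V p, S V -> subterm_at V p = subterm_at U (q ++ [:: 3]) ->
    subterm_at V p <> None ->
    exists q', p = q' ++ [:: 3] /\ subterm_at V q' = subterm_at U q.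

Definition subterm_of_frame (phi : frame) (u : term) : Prop :=
  exists t p, in_ran phi t /\ subterm_at t p = Some u.

Definition well_formed (phi : frame) (s : nat) : Prop :=
  (forall U q, in_ran phi U -> enc_occ U q ->
     agent_enc [seq n <- fnames phi | n != s] U q /\ prob_enc (in_ran phi) U q) /\
  (forall M K R, subterm_of_frame phi (TApp Enc [:: M; K; R]) ->
     ~ occurs s K /\ ~ occurs s R) /\
  (forall M K R, subterm_of_frame phi (TApp Enca [:: M; K; R]) ->
     ~ occurs s K /\ ~ occurs s R) /\
  (forall U V, subterm_of_frame phi (TApp Sign [:: U; V]) -> ~ occurs s V) /\
  (forall W, subterm_of_frame phi (TApp Pub [:: W]) -> ~ occurs s W) /\
  (forall W, subterm_of_frame phi (TApp Priv [:: W]) -> ~ occurs s W) /\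
  (forall f l, subterm_of_frame phi (TApp f l) -> ~ is_destructor f).

(* Main.v *)
Require Import Defs.
From mathcomp Require Import all_boot.

Lemma subterm_cat t r q u : subterm_at t r = Some u ->
  subterm_at t (r ++ q) = subterm_at u q.
Proof.
elim: r t => [|i r IH] t /=; first by case=> ->.
case: t => // f l; case: ifP => // _; exact: IH.
Qed.

Lemma prefix_one (r p : seq nat) : prefix (r ++ [:: 1]) (r ++ 1 :: p).
Proof. elim: r => [|x r IH] /=; [exact: prefix0s | by rewrite eqxx IH]. Qed.

Lemma key phi s t (wf : well_formed phi s) (Ht : in_ran phi t) p :
  forall r u, subterm_at t r = Some u -> well_arity u -> deduc phi u ->
  subterm_at u p = Some (TName s) ->
  deduc phi (TName s) \/ exists q u', [/\ prefix (q ++ [:: 1]) (r ++ p),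
     subterm_at t q = Some u' & (head_sym u' = Some Enc \/ head_sym u' = Some Enca)].
Proof.
case: wf => [_ [Henc [Henca [Hsign [Hpub [Hpriv Hdes]]]]]].
elim: p => [|i p IH] r u Hr Hwa Hd /=.
  by case=> Hu; left; rewrite -Hu.
case: u Hr Hwa Hd => // f l Hr Hwa Hd.
have Hsub : subterm_of_frame phi (TApp f l) by exists t, r.
have Hnd := Hdes _ _ Hsub.
case: ifP => // /andP [Hi0 Hil] Hc.
move: Hwa => /= /andP [/eqP Hsz Hall].
have rec : deduc phi (nth (TApp f l) l i.-1) -> deduc phi (TName s) \/
   exists q u', [/\ prefix (q ++ [:: 1]) (r ++ i :: p),
     subterm_at t q = Some u' & (head_sym u' = Some Enc \/ head_sym u' = Some Enca)].
  move=> Hdc.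
  have Hr' : subterm_at t (r ++ [:: i]) = Some (nth (TApp f l) l i.-1).
    by rewrite (@subterm_cat _ _ [:: i] _ Hr) /= Hi0 Hil.
  have Hwc : well_arity (nth (TApp f l) l i.-1).
    apply: (all_nthP (TApp f l) Hall); by case: i Hi0 Hil {Hr' Hc Hdc}.
  case: (IH _ _ Hr' Hwc Hdc Hc) => [H|[q [u' [Hp Hq Hh]]]]; first by left.
  by right; exists q, u'; split => //; rewrite -catA in Hp.
destruct f; try (exfalso; apply: Hnd; rewrite /is_destructor; tauto);
  destruct l as [|a [|b [|c [|d l]]]]; move: Hsz => /= Hsz; try discriminate;
  destruct i as [|[|[|[|i]]]]; try done; move: Hc rec => /= Hc rec.
- right; exists r, (TApp Enc [:: a; b; c]); split => //; [exact: prefix_one | by left].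
- exfalso; have [H _] := Henc _ _ _ Hsub; apply: H; by exists p.
- exfalso; have [_ H] := Henc _ _ _ Hsub; apply: H; by exists p.
- right; exists r, (TApp Enca [:: a; b; c]); split => //; [exact: prefix_one | by right].
- exfalso; have [H _] := Henca _ _ _ Hsub; apply: H; by exists p.
- exfalso; have [_ H] := Henca _ _ _ Hsub; apply: H; by exists p.
- exfalso; apply: (Hpub a Hsub); by exists p.
- exfalso; apply: (Hpriv a Hsub); by exists p.
- apply: rec; apply: (ded_eq (t := TApp Proj1 [:: TApp Pair [:: a; b]]));
    [apply: ded_app => //= v [<-|[]] // | exact: eqE_proj1].
- apply: rec; apply: (ded_eq (t := TApp Proj2 [:: TApp Pair [:: a; b]]));
    [apply: ded_app => //= v [<-|[]] // | exact: eqE_proj2].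
- apply: rec; apply: (ded_eq (t := TApp Retrieve [:: TApp Sign [:: a; b]]));
    [apply: ded_app => //= v [<-|[]] // | exact: eqE_retrieve].
- exfalso; apply: (Hsign a b Hsub); by exists p.
Qed.

Theorem lemma2p11 (phi : frame) (s y : nat) (t : term) (qs : seq nat) :
  valid_frame phi ->
  s \in fnames phi ->
  well_formed phi s ->
  lookup (fsub phi) y = Some t ->
  subterm_at t qs = Some (TName s) ->
  ~ deduc phi (TName s) ->
  exists q u, [/\ prefix q qs, q != qs,
    subterm_at t q = Some u,
    (head_sym u = Some Enc \/ head_sym u = Some Enca) &
    prefix (q ++ [:: 1]) qs].
Proof.
move=> [_ Hv] _ wf Hy Hqs Hnd.
have Ht : in_ran phi t by exists y.
have [Hwa _] := Hv _ Ht.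
case: (@key _ _ _ wf Ht qs [::] t erefl Hwa (ded_var Hy) Hqs) => [//|[q [u [Hp Hq Hh]]]].
exists q, u; split => //.
- exact: (@prefix_trans _ (q ++ [:: 1]) q qs (prefix_prefix q [:: 1]) Hp).
- apply/eqP => E; subst q; move/prefixP: Hp => [s3 E].
  have := congr1 size E; rewrite /= !size_cat /= => /eqP; by rewrite -addnA -{1}(addn0 (size qs)) eqn_add2l add1n.
Qed.
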